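(* Fix $n\ge1$. The map $\Psi\colon\mathrm{MAD}(c^\times)\to\overline{\mathcal{M}}_{n+1}$ is a bijection.
   Context: Place points $1,\ldots,n+1$ left to right on a horizontal line. An arc is a curve from a point $i$ to a point $j>i$ moving monotonically rightward and passing above or below each of $i+1,\ldots,j-1$; arcs are identified if they have the same endpoints and pass above the same points. A noncrossing arc diagram is a set of arcs that can be drawn so that no two share a left endpoint, no two share a right endpoint, and no two cross in their interiors. An arc from $i$ to $j$ is $c^\times$-sortable if, for each $k$ with $i<k<j$, it passes above $k$ when $k$ is odd and below $k$ when $k$ is even. $\mathrm{MAD}(c^\times)$ is the set of noncrossing arc diagrams consisting of $c^\times$-sortable arcs that are maximal under inclusion among such diagrams. For $\delta\in\mathrm{MAD}(c^\times)$, $\Psi(\delta)=\mathtt{M}_1\cdots\mathtt{M}_{n+1}$ where $\mathtt{M}_i=\mathtt{U}$ if $i\le n$ and $i+1$ is not the right endpoint of an arc of $\delta$; $\mathtt{M}_i=\mathtt{D}$ if $i\ge2$ and $i-1$ is not the left endpoint of an arc of $\delta$; and $\mathtt{M}_i=\mathtt{H}$ otherwise. A Motzkin path of length $m$ is a word in $\mathtt{U},\mathtt{D},\mathtt{H}$ of length $m$ with equally many $\mathtt{U}$'s and $\mathtt{D}$'s and every prefix having at least as many $\mathtt{U}$'s as $\mathtt{D}$'s. A peak is a consecutive $\mathtt{U}\mathtt{D}$; its height is $\#_\mathtt{U}(P)-\#_\mathtt{D}(P)$ for $P$ the prefix ending with that $\mathtt{U}$. $\overline{\mathcal{M}}_m$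 is the set of Motzkin paths of length $m$ with no peak of height $1$. (It is known that $\Psi(\delta)\in\overline{\mathcal{M}}_{n+1}$ for every $\delta\in\mathrm{MAD}(c^\times)$.) *)

(* Defs.v *)
From mathcomp Require Import all_boot.
Set Implicit Arguments. Unset Strict Implicit. Unset Printing Implicit Defensive.

(* Points 1, ..., n+1 are the values 1..n+1 of 'I_(n.+2) (value 0 is unused).
   An arc is (left endpoint, right endpoint, set of points it passes above).
   Arcs with the same endpoints and same above-set are identified: this is
   exactly equality of triples, given the validity condition below which
   forces the above-set to lie strictly between the endpoints. *)
Definition arcT (n : nat) : finType := ('I_n.+2 * 'I_n.+2 * {set 'I_n.+2})%type.

Section Arcs.
Variable n : nat.
Implicit Types (a b : arcT n) (k : 'I_n.+2).

Definition aleft a : nat := a.1.1.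
Definition aright a : nat := a.1.2.
Definition above a k : bool := k \in a.2.

Definition interior a k : bool := (aleft a < k) && (k < aright a).
Definition isend a k : bool := (k == aleft a :> nat) || (k == aright a :> nat).

Definition valid_arc a : bool :=
  [&& 1 <= aleft a, aleft a < aright a & [forall k, above a k ==> interior a k]].

Definition sortable a : bool :=
  valid_arc a && [forall k, interior a k ==> (above a k == odd k)].

(* At point k (in both closed spans), arc a is forced to be strictly above b. *)
Definition over_at a b k : bool :=
  [|| [&& interior a k, interior b k, above a k & ~~ above b k],
      [&& interior a k, isend b k & above a k]
    | [&& isend a k, interior b k & ~~ above b k]].

Definition crossing a b : bool :=
  [exists k, over_at a b k] && [exists k, over_at b a k].

Definition noncrossing_diagram (d : {set arcT n}) : bool :=
  [forall a in d, valid_arc a] &&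
  [forall a in d, forall b in d, (a != b) ==>
     [&& aleft a != aleft b, aright a != aright b & ~~ crossing a b]].

Definition sortable_nc (d : {set arcT n}) : bool :=
  noncrossing_diagram d && [forall a in d, sortable a].

Definition is_MAD (d : {set arcT n}) : Prop :=
  sortable_nc d /\ forall d' : {set arcT n}, sortable_nc d' -> d \subset d' -> d' = d.

End Arcs.

Inductive step := U | D | H.

Definition isU (s : step) : bool := if s is U then true else false.
Definition isD (s : step) : bool := if s is D then true else false.

Definition Psi_letter (n : nat) (d : {set arcT n}) (i : nat) : step :=
  if (i <= n) && ~~ [exists a in d, aright a == i.+1] then U
  else if (2 <= i) && ~~ [exists a in d, aleft a == i.-1] then D
  else H.

Definition Psi (n : nat) (d : {set arcT n}) : seq step :=
  [seq Psi_letter d i | i <- iota 1 n.+1].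

Definition motzkin (m : nat) (w : seq step) : Prop :=
  [/\ size w = m, count isU w = count isD w &
      forall p, count isD (take p w) <= count isU (take p w)].

(* height of the peak whose U is at (0-based) position p *)
Definition peak_height (w : seq step) (p : nat) : nat :=
  count isU (take p.+1 w) - count isD (take p.+1 w).

Definition no_peak_height1 (w : seq step) : Prop :=
  forall p, p.+1 < size w -> isU (nth H w p) -> isD (nth H w p.+1) ->
    peak_height w p <> 1.

Definition Mbar (m : nat) (w : seq step) : Prop := motzkin m w /\ no_peak_height1 w.

(* Main.v *)
Require Import Defs.
From mathcomp Require Import all_boot zify.
Set Implicit Arguments. Unset Strict Implicit. Unset Printing Implicit Defensive.

Lemma oddM x : odd x = (x %% 2 == 1). Proof. by rewrite modn2; case: (odd x). Qed.
Definition ov (l1 r1 l2 r2 k : nat) : bool :=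
  [|| [&& (l1 < k < r1), (l2 < k < r2), ((l1 < k < r1) && odd k) & ~~ ((l2 < k < r2) && odd k)],
      [&& l1 < k < r1, (k == l2) || (k == r2) & (l1 < k < r1) && odd k]
    | [&& (k == l1) || (k == r1), l2 < k < r2 & ~~ ((l2 < k < r2) && odd k)]].
Definition ovE l1 r1 l2 r2 := [|| ov l1 r1 l2 r2 l1, ov l1 r1 l2 r2 r1, ov l1 r1 l2 r2 l2 | ov l1 r1 l2 r2 r2].
Definition ncross l1 r1 l2 r2 := ovE l1 r1 l2 r2 && ovE l2 r2 l1 r1.
Ltac nc := rewrite /ncross /ovE /ov ?oddM; lia.
Lemma ov_E l1 r1 l2 r2 k : ov l1 r1 l2 r2 k -> ovE l1 r1 l2 r2.
Proof. rewrite /ovE /ov ?oddM. lia. Qed.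
Lemma N1 l1 r1 l2 r2 : l1 < r1 <= l2 -> l2 < r2 -> ~~ ncross l1 r1 l2 r2. Proof. nc. Qed.
Lemma N2 l1 r1 l2 r2 : l1 < l2 < r1 -> r1 < r2 -> odd (l2 + r1) -> ~~ ncross l1 r1 l2 r2. Proof. nc. Qed.
Lemma N3 l1 r1 l2 r2 : l2 < l1 < r1 -> r1 < r2 -> ~~ odd (l1 + r1) -> ~~ ncross l1 r1 l2 r2. Proof. nc. Qed.
Lemma N4 l1 r1 l2 r2 : l1 < l2 < r1 -> r1 < r2 -> ~~ odd (l2 + r1) -> ncross l1 r1 l2 r2. Proof. nc. Qed.
Lemma N5 l1 r1 l2 r2 : l2 < l1 < r1 -> r1 < r2 -> odd (l1 + r1) -> ncross l1 r1 l2 r2. Proof. nc. Qed.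
Lemma NA1 k lb rb : lb < rb -> lb != k -> rb != k.+2 -> ~~ ncross k k.+2 lb rb. Proof. nc. Qed.
Lemma NA2 k lb rb : lb < rb -> lb != k -> rb != k.+1 -> ncross k k.+1 lb rb -> (lb < k) && (k.+1 < rb). Proof. nc. Qed.
Lemma NC l lb r : lb < l.+2 -> lb != l -> l.+2 < r -> ncross lb l.+2 l r. Proof. nc. Qed.
Lemma NCb l lb rb : lb < l -> l.+1 < rb -> ncross l l.+1 lb rb. Proof. nc. Qed.
Lemma Nself l r : ~~ ncross l r l r. Proof. nc. Qed.
Lemma Nsym l1 r1 l2 r2 : ncross l1 r1 l2 r2 = ncross l2 r2 l1 r1. Proof. by rewrite /ncross andbC. Qed.

Lemma cntS (P : pred nat) m k : count P (iota m k.+1) = count P (iota m k) + P (m + k).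
Proof. by rewrite -addn1 iotaD count_cat /= addn0. Qed.

Lemma count_split (P : pred nat) a k :
  count P (iota 0 k) = count (fun x => P x && (x != a)) (iota 0 k) + (P a && (a < k)).
Proof.
elim: k => [|k IH]; first by rewrite /= andbF.
rewrite !cntS !add0n IH.
case: (eqVneq k a) => [->|hne] /=.
  by rewrite ltnn ltnSn; case: (P a) => /=; lia.
have -> : (a < k.+1) = (a < k) by rewrite ltnS leq_eqVlt eq_sym (negbTE hne).
by rewrite andbT; case: (P k); case: (P a && (a < k)) => /=; lia.
Qed.

Lemma count_eq0' (P : pred nat) k : (forall x, x < k -> P x = false) -> count P (iota 0 k) = 0.
Proof.
elim: k => [|k IH] // h; rewrite cntS IH ?add0n ?h //.
by move=> x hx; apply: h; apply: ltnW.
Qed.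

Lemma count_pos (P : pred nat) k : 0 < count P (iota 0 k) -> exists2 x, x < k & P x.
Proof.
elim: k => [|k IH] //; rewrite cntS add0n.
case hk: (P k); first by move=> _; exists k.
rewrite addn0 => /IH [x hx px]; exists x => //; exact: ltnW.
Qed.

Lemma cnt_mem (P : pred nat) x k : P x -> x < k -> 0 < count P (iota 0 k).
Proof. by move=> px hx; rewrite (count_split P x) px hx /=; lia. Qed.

Lemma max_ex (P : pred nat) B : (exists x, P x) -> (forall x, P x -> x < B) ->
  exists x, P x /\ forall y, P y -> y <= x.
Proof.
move=> ex hb; have ub : forall x, P x -> x <= B by move=> x /hb /ltnW.
by case: (ex_maxnP ex ub) => x px hm; exists x.
Qed.

Lemma min_ex (P : pred nat) : (exists x, P x) -> exists x, P x /\ forall y, P y -> x <= y.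
Proof. by move=> ex; case: (ex_minnP ex) => x px hm; exists x. Qed.

Lemma count_stable (P : pred nat) a b : a <= b -> (forall x, a <= x -> P x = false) ->
  count P (iota 0 b) = count P (iota 0 a).
Proof.
move=> hab h; rewrite -(subnKC hab) iotaD count_cat add0n.
rewrite (@eq_in_count _ P pred0 (iota a (b - a))) ?count_pred0 ?addn0 //.
by move=> x; rewrite mem_iota => /andP[hx _]; rewrite h.
Qed.

Lemma count_mono (P : pred nat) a b : a <= b -> count P (iota 0 a) <= count P (iota 0 b).
Proof. by move=> hab; rewrite -(subnKC hab) iotaD count_cat leq_addr. Qed.

Section Main.
Variable n : nat.
Local Notation A := (arcT n).
Implicit Types (a b : A) (d : {set A}).

Definition inL d (k : nat) : bool := [exists a in d, aleft a == k].
Definition inR d (k : nat) : bool := [exists a in d, aright a == k].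

Lemma sortable_above a k : sortable a -> above a k = interior a k && odd k.
Proof.
case/andP=> /and3P[_ _ /forallP H1] /forallP H2.
case Ha: (above a k).
  by have /implyP/(_ Ha) Hi := H1 k; have /implyP/(_ Hi)/eqP <- := H2 k; rewrite Hi.
case Hi: (interior a k) => //=.
by have /implyP/(_ Hi)/eqP <- := H2 k; rewrite Ha.
Qed.

Lemma sortable_range a : sortable a -> [/\ 1 <= aleft a, aleft a < aright a & aright a <= n.+1].
Proof.
case/andP=> /and3P[H1 H2 _] _; split => //.
by rewrite /aright -ltnS ltn_ord.
Qed.

Lemma sortable_eq a b : sortable a -> sortable b -> aleft a = aleft b -> aright a = aright b -> a = b.
Proof.
move=> sa sb el er.
case: a sa el er => [[a1 a2] a3]; case: b sb => [[b1 b2] b3] sb sa el er.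
have e1 : a1 = b1 by apply: val_inj.
have e2 : a2 = b2 by apply: val_inj.
subst; congr (_, _, _); apply/setP => k.
have := sortable_above k sa; have := sortable_above k sb.
by rewrite /above /interior /aleft /aright /= => -> ->.
Qed.

Definition mk (l r : nat) : A := (inord l, inord r, [set k : 'I_n.+2 | (l < k < r) && odd k]).

Lemma mk_left l r : l < n.+2 -> aleft (mk l r) = l.
Proof. by move=> h; rewrite /aleft /= inordK. Qed.
Lemma mk_right l r : r < n.+2 -> aright (mk l r) = r.
Proof. by move=> h; rewrite /aright /= inordK. Qed.

Lemma mk_sortable l r : 1 <= l -> l < r -> r <= n.+1 -> sortable (mk l r).
Proof.
move=> h1 h2 h3.
have hl : aleft (mk l r) = l by apply: mk_left; lia.
have hr : aright (mk l r) = r by apply: mk_right; lia.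
apply/andP; split; first (apply/and3P; split).
- by rewrite hl.
- by rewrite hl hr.
- apply/forallP => k; apply/implyP; rewrite /above /interior hl hr inE.
  by case/andP.
- apply/forallP => k; apply/implyP; rewrite /above /interior hl hr inE => ->.
  by [].
Qed.

Lemma over_atE a b k : sortable a -> sortable b ->
  over_at a b k = ov (aleft a) (aright a) (aleft b) (aright b) k.
Proof. by move=> sa sb; rewrite /over_at !sortable_above. Qed.

Lemma exovE a b : sortable a -> sortable b ->
  [exists k, over_at a b k] = ovE (aleft a) (aright a) (aleft b) (aright b).
Proof.
move=> sa sb; apply/existsP/idP.
  by case=> k; rewrite over_atE //; apply: ov_E.
rewrite /ovE => /or4P [] H.
- by exists a.1.1; rewrite over_atE.
- by exists a.1.2; rewrite over_atE.
- by exists b.1.1; rewrite over_atE.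
- by exists b.1.2; rewrite over_atE.
Qed.

Lemma crossingE a b : sortable a -> sortable b ->
  crossing a b = ncross (aleft a) (aright a) (aleft b) (aright b).
Proof. by move=> sa sb; rewrite /crossing !exovE. Qed.


Lemma snc_sort d a : sortable_nc d -> a \in d -> sortable a.
Proof. by case/andP=> _ /forall_inP H /H. Qed.

Lemma snc_pair d a b : sortable_nc d -> a \in d -> b \in d -> a != b ->
  [&& aleft a != aleft b, aright a != aright b & ~~ crossing a b].
Proof.
case/andP=> /andP[_ /forall_inP H] _ ha hb hab.
by have /forall_inP/(_ b hb)/implyP/(_ hab) := H a ha.
Qed.

Lemma snc_l d a b : sortable_nc d -> a \in d -> b \in d -> aleft a = aleft b -> a = b.
Proof.
move=> s ha hb e; apply/eqP; apply/negPn/negP => hab.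
by have := snc_pair s ha hb hab; rewrite e eqxx.
Qed.

Lemma snc_r d a b : sortable_nc d -> a \in d -> b \in d -> aright a = aright b -> a = b.
Proof.
move=> s ha hb e; apply/eqP; apply/negPn/negP => hab.
by have := snc_pair s ha hb hab; rewrite e eqxx andbF.
Qed.

Lemma snc_nc d a b : sortable_nc d -> a \in d -> b \in d ->
  ~~ ncross (aleft a) (aright a) (aleft b) (aright b).
Proof.
move=> s ha hb; have [->|hab] := eqVneq a b; first exact: Nself.
have := snc_pair s ha hb hab; rewrite crossingE ?(snc_sort s) //.
by case/and3P.
Qed.

Lemma snc_build d :
  (forall a, a \in d -> sortable a) ->
  (forall a b, a \in d -> b \in d -> aleft a = aleft b -> a = b) ->
  (forall a b, a \in d -> b \in d -> aright a = aright b -> a = b) ->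
  (forall a b, a \in d -> b \in d -> ~~ ncross (aleft a) (aright a) (aleft b) (aright b)) ->
  sortable_nc d.
Proof.
move=> hs hl hr hn; apply/andP; split; last by apply/forall_inP.
apply/andP; split.
  by apply/forall_inP => a /hs /andP[].
apply/forall_inP => a ha; apply/forall_inP => b hb; apply/implyP => hab.
apply/and3P; split.
- by apply/eqP => e; move: hab; rewrite (hl a b ha hb e) eqxx.
- by apply/eqP => e; move: hab; rewrite (hr a b ha hb e) eqxx.
- by rewrite crossingE ?hs // hn.
Qed.

Lemma inLP d k : reflect (exists2 a, a \in d & aleft a = k) (inL d k).
Proof.
apply: (iffP exists_inP) => [[a ha /eqP e]|[a ha e]]; exists a => //; exact/eqP.
Qed.
Lemma inRP d k : reflect (exists2 a, a \in d & aright a = k) (inR d k).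
Proof.
apply: (iffP exists_inP) => [[a ha /eqP e]|[a ha e]]; exists a => //; exact/eqP.
Qed.

Lemma inL_range d k : sortable_nc d -> inL d k -> 1 <= k <= n.
Proof.
move=> s /inLP [a ha <-]; have [h1 h2 h3] := sortable_range (snc_sort s ha).
apply/andP; split => //; lia.
Qed.
Lemma inR_range d k : sortable_nc d -> inR d k -> 2 <= k <= n.+1.
Proof.
move=> s /inRP [a ha <-]; have [h1 h2 h3] := sortable_range (snc_sort s ha).
apply/andP; split => //; lia.
Qed.

Lemma card_cnt d (f : A -> nat) :
  (forall a b, a \in d -> b \in d -> f a = f b -> a = b) ->
  forall k, #|[set a in d | f a < k]| = count (fun x => [exists a in d, f a == x]) (iota 0 k).
Proof.
move=> inj; elim=> [|k IH].
  rewrite /= (_ : [set a in d | f a < 0] = set0) ?cards0 //.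
  by apply/setP => a; rewrite !inE ltn0 andbF.
rewrite cntS add0n -IH.
have -> : [set a in d | f a < k.+1] = [set a in d | f a < k] :|: [set a in d | f a == k].
  by apply/setP => a; rewrite !inE ltnS leq_eqVlt; case: (a \in d); rewrite //= orbC.
rewrite cardsU (_ : _ :&: _ = set0) ?cards0 ?subn0; last first.
  by apply/setP => a; rewrite !inE; case: (a \in d) => //=; case: ltngtP.
congr (_ + _).
case: exists_inP => [[a ha /eqP e]|hn].
  rewrite (_ : [set a0 in d | f a0 == k] = [set a]) ?cards1 //.
  apply/setP => b; rewrite !inE; apply/andP/eqP => [[hb /eqP eb]|->]; last by rewrite ha e eqxx.
  by apply: inj => //; rewrite e eb.
rewrite (_ : [set a0 in d | f a0 == k] = set0) ?cards0 //.
by apply/setP => b; rewrite !inE; apply/negP => /andP[hb eb]; apply: hn; exists b.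
Qed.

Definition cL d k := count (inL d) (iota 0 k).
Definition cR d k := count (inR d) (iota 0 k).

Lemma cL_card d k : sortable_nc d -> cL d k = #|[set a in d | aleft a < k]|.
Proof. move=> s; rewrite /cL (@card_cnt d (fun a => aleft a)); first reflexivity. move=> a b ha hb; exact: snc_l s ha hb. Qed.
Lemma cR_card d k : sortable_nc d -> cR d k = #|[set a in d | aright a < k]|.
Proof. move=> s; rewrite /cR (@card_cnt d (fun a => aright a)); first reflexivity. move=> a b ha hb; exact: snc_r s ha hb. Qed.

Lemma cR_cL d k : sortable_nc d -> cR d k.+1 <= cL d k.
Proof.
move=> s; rewrite cL_card // cR_card //; apply: subset_leq_card.
apply/subsetP => a; rewrite !inE => /andP[ha hr]; rewrite ha /=.
have [_ h _] := sortable_range (snc_sort s ha); lia.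
Qed.

Lemma cL_tot d : sortable_nc d -> cL d n.+1 = #|d|.
Proof.
move=> s; rewrite cL_card //; apply: eq_card => a; rewrite inE.
case ha: (a \in d) => //=; have [_ h1 h2] := sortable_range (snc_sort s ha); lia.
Qed.
Lemma cR_tot d : sortable_nc d -> cR d n.+2 = #|d|.
Proof.
move=> s; rewrite cR_card //; apply: eq_card => a; rewrite inE.
case ha: (a \in d) => //=; have [_ h1 h2] := sortable_range (snc_sort s ha); lia.
Qed.


Lemma MAD_add d l r : is_MAD d -> 1 <= l -> l < r -> r <= n.+1 -> ~~ inL d l -> ~~ inR d r ->
  exists2 b, b \in d & ncross l r (aleft b) (aright b).
Proof.
move=> [s mx] h1 h2 h3 nl nr.
case: (boolP [exists b in d, ncross l r (aleft b) (aright b)]) => [/exists_inP[b hb hc]|hn].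
  by exists b.
have ha := mk_sortable h1 h2 h3.
have hl : aleft (mk l r) = l by apply: mk_left; lia.
have hr : aright (mk l r) = r by apply: mk_right; lia.
have hnc : forall b, b \in d -> ~~ ncross l r (aleft b) (aright b).
  by move=> b hb; apply/negP => hc; move/negP: hn; apply; apply/exists_inP; exists b.
have s' : sortable_nc (mk l r |: d).
  apply: snc_build.
  - by move=> a; rewrite !inE => /orP[/eqP->|/(snc_sort s)].
  - move=> a b; rewrite !inE => /orP[/eqP->|ha'] /orP[/eqP->|hb'] //.
    + by move=> e; case/negP: nl; apply/inLP; exists b => //; rewrite -e hl.
    + by move=> e; case/negP: nl; apply/inLP; exists a => //; rewrite e hl.
    + exact: snc_l s ha' hb'.
  - move=> a b; rewrite !inE => /orP[/eqP->|ha'] /orP[/eqP->|hb'] //.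
    + by move=> e; case/negP: nr; apply/inRP; exists b => //; rewrite -e hr.
    + by move=> e; case/negP: nr; apply/inRP; exists a => //; rewrite e hr.
    + exact: snc_r s ha' hb'.
  - move=> a b; rewrite !inE => /orP[/eqP->|ha'] /orP[/eqP->|hb'].
    + exact: Nself.
    + by rewrite hl hr; apply: hnc.
    + by rewrite Nsym hl hr; apply: hnc.
    + exact: snc_nc s ha' hb'.
have e := mx _ s' (subsetUr _ _).
by case/negP: nl; apply/inLP; exists (mk l r) => //; rewrite -e setU11.
Qed.

Lemma MAD_A1 d k : is_MAD d -> 1 <= k -> k.+2 <= n.+1 -> inL d k || inR d k.+2.
Proof.
move=> M h1 h2; apply/negPn/negP; rewrite negb_or => /andP[nl nr].
have [b hb hc] := MAD_add M h1 (ltnW (ltnSn _)) h2 nl nr.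
have [_ hlr _] := sortable_range (snc_sort M.1 hb).
have e1 : aleft b != k by apply/eqP => e; case/negP: nl; apply/inLP; exists b.
have e2 : aright b != k.+2 by apply/eqP => e; case/negP: nr; apply/inRP; exists b.
by have := NA1 hlr e1 e2; rewrite hc.
Qed.

Lemma MAD_A2 d k : is_MAD d -> 1 <= k -> k <= n ->
  [|| inL d k, inR d k.+1 | [exists b in d, (aleft b < k) && (k.+1 < aright b)]].
Proof.
move=> M h1 h2; apply/negPn/negP; rewrite !negb_or => /and3P[nl nr ne].
have [b hb hc] := MAD_add M h1 (ltnSn _) h2 nl nr.
have [_ hlr _] := sortable_range (snc_sort M.1 hb).
have e1 : aleft b != k by apply/eqP => e; case/negP: nl; apply/inLP; exists b.
have e2 : aright b != k.+1 by apply/eqP => e; case/negP: nr; apply/inRP; exists b.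
by case/negP: ne; apply/exists_inP; exists b => //; apply: NA2.
Qed.

Lemma letterE d i : Psi_letter d i =
  if (i <= n) && ~~ inR d i.+1 then U else if (2 <= i) && ~~ inL d i.-1 then D else H.
Proof. by []. Qed.

Lemma isU_letter d i : isU (Psi_letter d i) = (i <= n) && ~~ inR d i.+1.
Proof. by rewrite letterE; case: ifP => //; case: ifP. Qed.

Lemma isD_letter d i : isD (Psi_letter d i) =
  ~~ ((i <= n) && ~~ inR d i.+1) && ((2 <= i) && ~~ inL d i.-1).
Proof. by rewrite letterE; case: ifP => //; case: ifP. Qed.

Definition cU d m := count (fun j => isU (Psi_letter d j)) (iota 1 m).
Definition cD d m := count (fun j => isD (Psi_letter d j)) (iota 1 m).

Lemma PU d m : sortable_nc d -> m <= n -> cU d m + cR d m.+2 = m.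
Proof.
move=> s; elim: m => [|m IH] hm.
  rewrite /cU /cR /= add0n.
  case h0: (inR d 0); first by have := inR_range s h0.
  case h1: (inR d 1); first by have := inR_range s h1.
  by [].
rewrite /cU /cR (cntS _ 1 m) (cntS _ 0 m.+2) isU_letter add1n add0n.
have := IH (ltnW hm); rewrite /cU /cR hm /=; case: (inR d m.+2) => /=; lia.
Qed.

Lemma PD d m : is_MAD d -> 1 <= m -> m <= n.+1 -> cD d m + cL d m = m.-1.
Proof.
move=> M; elim: m => [|m IH] // _ hm.
case: m IH hm => [|m] IH hm.
  rewrite /cD /cL /=.
  case h0: (inL d 0); first by have := inL_range M.1 h0.
  by rewrite isD_letter /= andbF.
rewrite /cD /cL (cntS _ 1 m.+1) (cntS _ 0 m.+1) isD_letter add1n add0n.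
have := IH isT (ltnW hm); rewrite /cD /cL.
case hl: (inL d m.+1) => /=; first lia.
have hr : (m.+2 <= n) ==> inR d m.+3.
  apply/implyP => h; have := MAD_A1 M (ltn0Sn m) h; by rewrite hl.
move: hr; case: (m.+2 <= n); case: (inR d m.+3) => //= _; lia.
Qed.

Lemma cU_last d : cU d n.+1 = cU d n.
Proof. by rewrite /cU cntS isU_letter /= ltnn addn0. Qed.

Lemma cDU d m : is_MAD d -> m <= n.+1 -> cD d m <= cU d m.
Proof.
move=> M hm; have s := M.1.
case: m hm => [|m] hm; first by [].
have hP := PD M (ltn0Sn m) hm.
have [hm'|hm'] := leqP m.+1 n.
  have hU := PU s hm'.
  have h1 := cR_cL m.+2 s.
  have h2 : cL d m.+2 = cL d m.+1 + inL d m.+1 by rewrite /cL cntS.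
  lia.
have e : m = n by lia.
subst m; rewrite cU_last; have hU := PU s (leqnn n).
rewrite cR_tot // in hU; rewrite cL_tot // in hP; lia.
Qed.

Lemma cDU_tot d : is_MAD d -> cD d n.+1 = cU d n.+1.
Proof.
move=> M; have s := M.1.
have hP := PD M (ltn0Sn n) (leqnn _).
rewrite cU_last; have hU := PU s (leqnn n).
rewrite cR_tot // in hU; rewrite cL_tot // in hP; lia.
Qed.

Lemma Psi_nth d i : i < n.+1 -> nth H (Psi d) i = Psi_letter d i.+1.
Proof. by move=> h; rewrite /Psi (nth_map 0) ?size_iota // nth_iota // add1n. Qed.

Lemma cntU_take d p : count isU (take p (Psi d)) = cU d (minn p n.+1).
Proof. by rewrite /Psi -map_take take_iota count_map. Qed.
Lemma cntD_take d p : count isD (take p (Psi d)) = cD d (minn p n.+1).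
Proof. by rewrite /Psi -map_take take_iota count_map. Qed.
Lemma cntU_all d : count isU (Psi d) = cU d n.+1.
Proof. by rewrite /Psi count_map. Qed.
Lemma cntD_all d : count isD (Psi d) = cD d n.+1.
Proof. by rewrite /Psi count_map. Qed.

Lemma Psi_Mbar d : is_MAD d -> Mbar n.+1 (Psi d).
Proof.
move=> M; have s := M.1; split; first split.
- by rewrite size_map size_iota.
- by rewrite cntU_all cntD_all cDU_tot.
- by move=> p; rewrite cntU_take cntD_take; apply: cDU => //; apply: geq_minr.
move=> p hp hu hd he.
rewrite size_map size_iota in hp.
rewrite /peak_height cntU_take cntD_take (minn_idPl (ltnW hp)) in he.
have hp2 : p < n.+1 by lia. have hp3 : p.+1 < n.+1 by lia.
rewrite Psi_nth // isU_letter in hu; rewrite Psi_nth // isD_letter /= in hd.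
move/andP: hu => [hpn nR]; move/andP: hd => [_ nL].
have hU := PU s hpn.
have hP := PD M (ltn0Sn p) (ltnW hp).
have h1 := cR_cL p.+2 s.
have h2 : cL d p.+2 = cL d p.+1 + inL d p.+1 by rewrite /cL cntS.
have h3 : cR d p.+3 = cR d p.+2 + inR d p.+2 by rewrite /cR cntS.
rewrite (negbTE nL) in h2; rewrite (negbTE nR) in h3.
have eq : cR d p.+2 = cL d p.+2 by lia.
rewrite cR_card // cL_card // in eq.
have sub : [set a in d | aright a < p.+2] \subset [set a in d | aleft a < p.+2].
  apply/subsetP => a; rewrite !inE => /andP[ha hr]; rewrite ha /=.
  have [_ h _] := sortable_range (snc_sort s ha); lia.
have /eqP E : [set a in d | aright a < p.+2] == [set a in d | aleft a < p.+2].
  by rewrite eqEcard sub eq leqnn.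
have := MAD_A2 M (ltn0Sn p) hpn; rewrite (negbTE nL) (negbTE nR) /=.
case/exists_inP => b hb /andP[hl hr].
have : b \in [set a in d | aleft a < p.+2] by rewrite inE hb /=; lia.
rewrite -E inE => /andP[_]; lia.
Qed.

Lemma uniq_core d1 d2 a b : sortable_nc d1 -> sortable_nc d2 ->
  inL d1 =1 inL d2 -> inR d1 =1 inR d2 ->
  a \in d1 -> a \notin d2 -> b \in d2 -> b \notin d1 ->
  aright a = aright b -> aleft a < aleft b ->
  (forall x, x \in d1 -> x \notin d2 -> aright a <= aright x) ->
  (forall x, x \in d2 -> x \notin d1 -> aright a <= aright x) -> False.
Proof.
move=> s1 s2 eL eR ha1 ha2 hb2 hb1 er el m1 m2.
have [_ hab _] := sortable_range (snc_sort s2 hb2).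
have /inLP [c hc1 ec] : inL d1 (aleft b) by rewrite eL; apply/inLP; exists b.
have hc : aright a < aright c.
  have [h|h|h] := ltngtP (aright a) (aright c) => //.
    case hc2: (c \in d2).
      by have e := snc_l s2 hc2 hb2 ec; move: hb1; rewrite -e hc1.
    by have := m1 c hc1 (negbT hc2); lia.
  by have e := snc_r s1 ha1 hc1 h; move: el; rewrite e ec ltnn.
have /inLP [e he2 ee] : inL d2 (aleft a) by rewrite -eL; apply/inLP; exists a.
have he : aright a < aright e.
  have [h|h|h] := ltngtP (aright a) (aright e) => //.
    case he1: (e \in d1).
      by have e' := snc_l s1 he1 ha1 ee; move: ha2; rewrite -e' he2.
    by have := m2 e he2 (negbT he1); lia.
  by have e' := snc_r s2 hb2 he2 (etrans (esym er) h); move: el; rewrite e' ee ltnn.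
have n1 := snc_nc s1 ha1 hc1; have n2 := snc_nc s2 hb2 he2.
rewrite ec in n1; rewrite ee in n2.
case ho: (odd (aleft b + aright a)).
  have h1 : aleft a < aleft b < aright b by apply/andP; split.
  have h2 : aright b < aright e by rewrite -er.
  have h3 : odd (aleft b + aright b) by rewrite -er.
  by move: n2; rewrite (N5 h1 h2 h3).
have h1 : aleft a < aleft b < aright a by apply/andP; split => //; rewrite er.
have h3 : ~~ odd (aleft b + aright a) by rewrite ho.
by move: n1; rewrite (N4 h1 hc h3).
Qed.

Lemma uniq_step d1 d2 a : sortable_nc d1 -> sortable_nc d2 ->
  inL d1 =1 inL d2 -> inR d1 =1 inR d2 ->
  a \in d1 -> a \notin d2 ->
  (forall x, x \in d1 -> x \notin d2 -> aright a <= aright x) ->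
  (forall x, x \in d2 -> x \notin d1 -> aright a <= aright x) -> False.
Proof.
move=> s1 s2 eL eR ha1 ha2 m1 m2.
have /inRP [b hb2 eb] : inR d2 (aright a) by rewrite -eR; apply/inRP; exists a.
have hb1 : b \notin d1.
  by apply/negP => hb1; have e := snc_r s1 hb1 ha1 eb; move: ha2; rewrite -e hb2.
have nl : aleft a != aleft b.
  apply/eqP => e; have e' := sortable_eq (snc_sort s1 ha1) (snc_sort s2 hb2) e (esym eb).
  by move: ha2; rewrite e' hb2.
case: (ltngtP (aleft a) (aleft b)) nl => // h _.
  exact: (uniq_core s1 s2 eL eR ha1 ha2 hb2 hb1 (esym eb) h m1 m2).
apply: (uniq_core s2 s1 (fun x => esym (eL x)) (fun x => esym (eR x)) hb2 hb1 ha1 ha2 eb h).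
  by move=> x hx1 hx2; rewrite eb; apply: m2.
by move=> x hx1 hx2; rewrite eb; apply: m1.
Qed.

Lemma uniq_diag d1 d2 : sortable_nc d1 -> sortable_nc d2 ->
  inL d1 =1 inL d2 -> inR d1 =1 inR d2 -> d1 = d2.
Proof.
move=> s1 s2 eL eR.
pose P := fun x => (x \in d1) != (x \in d2).
case: (pickP P) => [x0 hx0|none]; last first.
  by apply/setP => x; have := none x; rewrite /P; case: (x \in d1); case: (x \in d2).
case: (arg_minnP (fun a => aright a) hx0) => a ha hmin.
exfalso.
have m1 : forall x, x \in d1 -> x \notin d2 -> aright a <= aright x.
  by move=> x h1 h2; apply: hmin; rewrite /P h1 (negbTE h2).
have m2 : forall x, x \in d2 -> x \notin d1 -> aright a <= aright x.
  by move=> x h1 h2; apply: hmin; rewrite /P h1 (negbTE h2).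
move: ha; rewrite /P; case ha1: (a \in d1); case ha2: (a \in d2) => // _.
  exact: (uniq_step s1 s2 eL eR ha1 (negbT ha2) m1 m2).
exact: (uniq_step s2 s1 (fun x => esym (eL x)) (fun x => esym (eR x)) ha2 (negbT ha1) m2 m1).
Qed.

Lemma inL_letter d l : is_MAD d -> 1 <= l <= n -> inL d l = ~~ isD (Psi_letter d l.+1).
Proof.
move=> M /andP[h1 h2]; rewrite isD_letter /=.
case hl: (inL d l); first by rewrite /= !andbF.
case: (leqP l.+1 n) => h /=.
  by have := MAD_A1 M h1 h; rewrite hl /= => ->; rewrite ltnS h1.
by rewrite ltnS h1.
Qed.

Lemma inR_letter d r : 2 <= r <= n.+1 -> inR d r = ~~ isU (Psi_letter d r.-1).
Proof.
case: r => [|r] // /andP[h1 h2]; rewrite isU_letter /= -ltnS h2 /=.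
by case: (inR d r.+1).
Qed.

Lemma Psi_inj d1 d2 : is_MAD d1 -> is_MAD d2 -> Psi d1 = Psi d2 -> d1 = d2.
Proof.
move=> M1 M2 E.
have eqlet : forall i, i < n.+1 -> Psi_letter d1 i.+1 = Psi_letter d2 i.+1.
  by move=> i hi; rewrite -!Psi_nth // E.
apply: uniq_diag M1.1 M2.1 _ _ => k.
  case hk: (1 <= k <= n).
    rewrite !inL_letter // eqlet //; lia.
  case h1: (inL d1 k); first by have := inL_range M1.1 h1; rewrite hk.
  case h2: (inL d2 k); first by have := inL_range M2.1 h2; rewrite hk.
  by [].
case hk: (2 <= k <= n.+1).
  rewrite !inR_letter //; case: k hk => [|[|k]] // hk; rewrite /= eqlet //; lia.
case h1: (inR d1 k); first by have := inR_range M1.1 h1; rewrite hk.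
case h2: (inR d2 k); first by have := inR_range M2.1 h2; rewrite hk.
by [].
Qed.

Lemma inL_U a d x : inL (a |: d) x = (aleft a == x) || inL d x.
Proof.
apply/inLP/orP => [[b]|[/eqP <-|/inLP [b hb <-]]].
- by rewrite !inE => /orP[/eqP ->|hb] <-; [left|right; apply/inLP; exists b].
- by exists a => //; rewrite setU11.
- by exists b => //; rewrite inE hb orbT.
Qed.
Lemma inR_U a d x : inR (a |: d) x = (aright a == x) || inR d x.
Proof.
apply/inRP/orP => [[b]|[/eqP <-|/inRP [b hb <-]]].
- by rewrite !inE => /orP[/eqP ->|hb] <-; [left|right; apply/inRP; exists b].
- by exists a => //; rewrite setU11.
- by exists b => //; rewrite inE hb orbT.
Qed.

Lemma cross_new ls r0 lb rb : ls < r0 -> lb < rb -> r0 < rb -> lb != ls ->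
  (lb < r0 -> lb < ls -> ~~ odd (ls + r0)) ->
  (lb < r0 -> ls < lb -> odd (lb + r0)) -> ~~ ncross ls r0 lb rb.
Proof.
move=> h1 h2 h3 h4 h5 h6.
case: (leqP r0 lb) => h7; first by apply: N1 => //; apply/andP.
case: (ltngtP lb ls) h4 => // h8 _.
  by apply: N3 => //; [apply/andP | apply: h5].
by apply: N2 => //; [apply/andP | apply: h6].
Qed.

Lemma exists_diag (L R : pred nat) :
  (forall x, L x -> 1 <= x <= n) -> (forall x, R x -> 2 <= x <= n.+1) ->
  (forall k, count R (iota 0 k.+1) <= count L (iota 0 k)) ->
  count R (iota 0 n.+2) = count L (iota 0 n.+2) ->
  exists d, [/\ sortable_nc d, inL d =1 L & inR d =1 R].
Proof.
move: {2}(count R (iota 0 n.+2)) (erefl (count R (iota 0 n.+2))) => m.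
elim: m L R => [|m IH] L R hm hL hR hB hT.
  have L0 : forall x, L x = false.
    move=> x; apply/negP => lx; have hx := hL x lx.
    have : x < n.+2 by lia.
    by move/(cnt_mem lx); rewrite -hT hm.
  have R0 : forall x, R x = false.
    move=> x; apply/negP => rx; have hx := hR x rx.
    have : x < n.+2 by lia.
    by move/(cnt_mem rx); rewrite hm.
  exists set0; split.
  - by apply: snc_build => a; rewrite inE.
  - by move=> x; rewrite L0; apply/inLP => -[a]; rewrite inE.
  - by move=> x; rewrite R0; apply/inRP => -[a]; rewrite inE.
have [r0 [Rr0 r0min]] : exists r0, R r0 /\ forall r, R r -> r0 <= r.
  apply: min_ex; have : 0 < count R (iota 0 n.+2) by rewrite hm.
  by case/count_pos => x _ rx; exists x.
have hr0 := hR r0 Rr0.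
have [ls [Lls [hls hrule]]] : exists ls, L ls /\ ls < r0 /\
    forall l, L l -> l < r0 -> l != ls ->
      (l < ls -> ~~ odd (ls + r0)) /\ (ls < l -> odd (l + r0)).
  have hB0 := hB r0.
  have : 0 < count R (iota 0 r0.+1) by apply: (cnt_mem Rr0).
  move=> /leq_trans /(_ hB0) /count_pos [l0 hl0 Ll0].
  case: (boolP (has (fun l => L l && (l < r0) && ~~ odd (l + r0)) (iota 0 r0))).
    case/hasP => l1 _ hl1.
    have [ls [/andP[/andP[Lls hls] hev] hmax]] :=
      max_ex (ex_intro (fun l => L l && (l < r0) && ~~ odd (l + r0)) l1 hl1)
        (fun x => (fun h => (andP (andP h).1).2)).
    exists ls; split => //; split => // l Ll hl hne; split => // hlt.
    case ho: (odd (l + r0)) => //.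
    have := hmax l; rewrite Ll hl ho /= => /(_ isT); lia.
  move=> hno.
  have [ls [/andP[Lls hls] hmin]] := min_ex (ex_intro (fun l => L l && (l < r0)) l0 (introT andP (conj Ll0 hl0))).
  exists ls; split => //; split => // l Ll hl hne; split.
    by move=> hlt; have := hmin l; rewrite Ll hl => /(_ isT); lia.
  move=> _; case ho: (odd (l + r0)) => //.
  case/hasP: hno; exists l; first by rewrite mem_iota.
  by rewrite Ll hl ho.
pose L' := fun x => L x && (x != ls).
pose R' := fun x => R x && (x != r0).
have cL' : forall k, count L (iota 0 k) = count L' (iota 0 k) + (ls < k).
  by move=> k; rewrite (count_split L ls) Lls.
have cR' : forall k, count R (iota 0 k) = count R' (iota 0 k) + (r0 < k).
  by move=> k; rewrite (count_split R r0) Rr0.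
have [d' [s' eL eR]] : exists d, [/\ sortable_nc d, inL d =1 L' & inR d =1 R'].
  apply: IH.
  - by move: hm; rewrite cR'; move: hr0 => /andP[_ h]; rewrite ltnS h; lia.
  - by move=> x /andP[/hL].
  - by move=> x /andP[/hR].
  - move=> k; have := hB k; rewrite cL' cR'.
    case: (leqP r0 k) => hk.
      have -> : r0 < k.+1 by lia.
      have -> : ls < k by lia.
      lia.
    have -> : count R' (iota 0 k.+1) = 0.
      apply: count_eq0' => x hx; rewrite /R'.
      case rx: (R x) => //=; have := r0min x rx; lia.
    by [].
  - move: hT; rewrite cL' cR'; move: hr0 => /andP[_ h].
    have -> : r0 < n.+2 by lia.
    have -> : ls < n.+2 by lia.
    lia.
have hlsr := hL ls Lls.
have sa : sortable (mk ls r0) by apply: mk_sortable => //; [lia | lia].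
have hl : aleft (mk ls r0) = ls by apply: mk_left; lia.
have hr : aright (mk ls r0) = r0 by apply: mk_right; lia.
have pb : forall b, b \in d' ->
    [/\ aleft b < aright b, L (aleft b), aleft b != ls, R (aright b) & r0 < aright b].
  move=> b hb; have [_ h _] := sortable_range (snc_sort s' hb).
  have : L' (aleft b) by rewrite -eL; apply/inLP; exists b.
  have : R' (aright b) by rewrite -eR; apply/inRP; exists b.
  case/andP => Rb nb /andP[Lb nlb]; split => //.
  by have := r0min _ Rb; rewrite leq_eqVlt eq_sym (negbTE nb).
have hnc : forall b, b \in d' -> ~~ ncross ls r0 (aleft b) (aright b).
  move=> b hb; have [h1 h2 h3 h4 h5] := pb b hb.
  apply: cross_new => // h6.
    by move=> h7; exact: (hrule _ h2 h6 h3).1 h7.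
  by move=> h7; exact: (hrule _ h2 h6 h3).2 h7.
exists (mk ls r0 |: d'); split.
- apply: snc_build.
  + by move=> a; rewrite !inE => /orP[/eqP->|/(snc_sort s')].
  + move=> a b; rewrite !inE => /orP[/eqP->|ha'] /orP[/eqP->|hb'] //.
    * by move=> e; have [_ _ h _ _] := pb b hb'; move: h; rewrite -e hl eqxx.
    * by move=> e; have [_ _ h _ _] := pb a ha'; move: h; rewrite e hl eqxx.
    * exact: snc_l s' ha' hb'.
  + move=> a b; rewrite !inE => /orP[/eqP->|ha'] /orP[/eqP->|hb'] //.
    * by move=> e; have [_ _ _ _ h] := pb b hb'; move: h; rewrite -e hr ltnn.
    * by move=> e; have [_ _ _ _ h] := pb a ha'; move: h; rewrite e hr ltnn.
    * exact: snc_r s' ha' hb'.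
  + move=> a b; rewrite !inE => /orP[/eqP->|ha'] /orP[/eqP->|hb'].
    * exact: Nself.
    * by rewrite hl hr; apply: hnc.
    * by rewrite Nsym hl hr; apply: hnc.
    * exact: snc_nc s' ha' hb'.
- move=> x; rewrite inL_U eL hl /L'.
  by case: (eqVneq ls x) => [<-|hx] //=; rewrite andbT.
- move=> x; rewrite inR_U eR hr /R'.
  by case: (eqVneq r0 x) => [<-|hx] //=; rewrite andbT.
Qed.

Section Surj.
Variable w : seq step.
Hypothesis Mw : Mbar n.+1 w.

Let u i := isU (nth H w i).
Let dn i := isD (nth H w i).
Definition Lw k := (1 <= k <= n) && ~~ isD (nth H w k).
Definition Rw k := (2 <= k <= n.+1) && ~~ isU (nth H w k.-2).

Lemma w_size : size w = n.+1.
Proof. by case: Mw => -[]. Qed.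

Lemma take_w m : m <= n.+1 -> take m w = map (nth H w) (iota 0 m).
Proof.
move=> hm; rewrite -{1}(mkseq_nth H w) /mkseq -map_take take_iota w_size.
by rewrite (minn_idPl hm).
Qed.

Lemma W1 m : m <= n.+1 -> count dn (iota 0 m) <= count u (iota 0 m).
Proof.
move=> hm; case: Mw => -[_ _ hp] _; have := hp m.
by rewrite take_w // !count_map.
Qed.

Lemma W2 : count u (iota 0 n.+1) = count dn (iota 0 n.+1).
Proof.
case: Mw => -[_ he _] _; move: he.
by rewrite -(take_size w) w_size take_w // !count_map.
Qed.

Lemma excl j : u j + dn j <= 1.
Proof. by rewrite /u /dn; case: (nth H w j). Qed.

Lemma dn0 : dn 0 = false.
Proof.
have := W1 (ltn0Sn n); rewrite /= !addn0; have := excl 0.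
by case: (dn 0); case: (u 0).
Qed.

Lemma un : u n = false.
Proof.
have h1 := W1 (leqnSn n); have h2 := W2; have h3 := excl n.
move: h2; rewrite !cntS !add0n.
by case: (u n) h3 => //; case: (dn n) => //= _; lia.
Qed.

Lemma FR j : j <= n -> count Rw (iota 0 j.+2) + count u (iota 0 j) = j.
Proof.
elim: j => [|j IH] hj.
  by rewrite /= /Rw /=.
rewrite (cntS _ 0 j.+2) (cntS _ 0 j) !add0n.
have := IH (ltnW hj).
have -> : Rw j.+2 = ~~ u j.
  by rewrite /Rw /u /= ltnS hj.
by case: (u j) => /=; lia.
Qed.

Lemma FL j : j <= n -> count Lw (iota 0 j.+1) + count dn (iota 0 j.+1) = j.
Proof.
elim: j => [|j IH] hj.
  by rewrite /= /Lw /= dn0.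
rewrite (cntS _ 0 j.+1) (cntS _ 0 j.+1) !add0n.
have := IH (ltnW hj).
have -> : Lw j.+1 = ~~ dn j.+1.
  by rewrite /Lw /dn /= hj /=; case: (nth H w j.+1).
by case: (dn j.+1) => /=; lia.
Qed.

Lemma ballot k : count Rw (iota 0 k.+1) <= count Lw (iota 0 k).
Proof.
have main : forall j, j <= n -> count Rw (iota 0 j.+2) <= count Lw (iota 0 j.+1).
  move=> j hj; have h1 := FR hj; have h2 := FL hj.
  have h3' : count dn (iota 0 j) <= count u (iota 0 j) by apply: W1; lia.
  have h4 : count dn (iota 0 j.+1) <= count u (iota 0 j.+1) by apply: W1; lia.
  rewrite (cntS dn 0 j) add0n in h2 h4; rewrite (cntS u 0 j) add0n in h4; have := excl j; lia.
case: k => [|k]; first by rewrite /= /Rw.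
case: (leqP k n) => hk; first exact: main.
rewrite (@count_stable Rw n.+2 k.+2); last 2 first.
- lia.
- by move=> x hx; rewrite /Rw; apply/negbTE; lia.
apply: leq_trans (main n (leqnn n)) _; apply: count_mono; lia.
Qed.

Lemma total : count Rw (iota 0 n.+2) = count Lw (iota 0 n.+2).
Proof.
have h1 := FR (leqnn n); have h2 := FL (leqnn n); have h3 := W2.
rewrite (cntS Lw 0 n.+1) add0n (_ : Lw n.+1 = false) ?addn0; last by apply/negbTE; rewrite /Lw; lia.
move: h3; rewrite (cntS _ 0 n) add0n un addn0; lia.
Qed.

Lemma Rw_range x : Rw x -> 2 <= x <= n.+1.
Proof. by case/andP. Qed.
Lemma Lw_range x : Lw x -> 1 <= x <= n.
Proof. by case/andP. Qed.

Lemma cnt_eqL d m : inL d =1 Lw -> cL d m = count Lw (iota 0 m).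
Proof. by move=> e; apply: eq_count. Qed.
Lemma cnt_eqR d m : inR d =1 Rw -> cR d m = count Rw (iota 0 m).
Proof. by move=> e; apply: eq_count. Qed.

Lemma surj : exists2 d : {set A}, is_MAD d & Psi d = w.
Proof.
have [d [s eL eR]] := exists_diag Lw_range Rw_range ballot total.
have bw : forall k, 1 <= k -> k.+2 <= n.+1 -> Lw k || Rw k.+2.
  move=> k h1 h2; rewrite /Lw /Rw /=.
  have -> : (1 <= k <= n) by lia.
  have -> : (k.+2 <= n.+1) by lia.
  by case: (nth H w k).
have cov : forall p, p < n -> ~~ Lw p.+1 -> ~~ Rw p.+2 ->
    exists2 b, b \in d & (aleft b < p.+1) && (p.+2 < aright b).
  move=> p hp nl nr.
  have hD : dn p.+1 by move: nl; rewrite /Lw /= hp /= negbK.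
  have hU : u p by move: nr; rewrite /Rw /= ltnS hp /= negbK.
  have np : peak_height w p <> 1.
    case: Mw => _ np; apply: np => //; rewrite w_size; lia.
  rewrite /peak_height take_w in np; last lia.
  rewrite !count_map in np.
  have f1 := FR hp; have f2 := FL hp.
  have w1 := W1 (ltnW (ltnW (leq_ltn_trans hp (ltnSn n)))).
  have ex := excl p.
  move: f2; rewrite (cntS dn 0 p.+1) add0n hD => f2.
  move: np; rewrite (cntS dn 0 p) (cntS u 0 p) add0n hU => np.
  have lt : count Rw (iota 0 p.+3) < count Lw (iota 0 p.+2).
    rewrite (cntS u 0 p) add0n hU in f1; rewrite (cntS dn 0 p) add0n in f2.
    move: ex; rewrite hU; lia.
  rewrite -(cnt_eqL _ eL) -(cnt_eqR _ eR) cL_card // cR_card // in lt.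
  case: (boolP ([set a in d | aleft a < p.+2] \subset [set a in d | aright a < p.+3])).
    by move/subset_leq_card; lia.
  case/subsetPn => b; rewrite !inE => /andP[hb h1] /nandP [|h2]; first by rewrite hb.
  exists b => //; apply/andP; split; last by lia.
  have : aleft b != p.+1.
    by apply/eqP => e; move: nl; rewrite -eL; case/negP; apply/inLP; exists b.
  lia.
exists d; last first.
  apply: (@eq_from_nth _ H); first by rewrite size_map size_iota w_size.
  rewrite size_map size_iota => i hi.
  rewrite Psi_nth // letterE eR eL /Rw /Lw /=.
  case E: (nth H w i) => /=.
  - have hin : i < n.
      case: (ltngtP i n) => // hin; first lia.
      by move: un; rewrite /u -hin E.
    by case: ifP => h1; [|case: ifP => h2]; rewrite //; exfalso; lia.
  - have hi0 : 0 < i.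
      case: i hi E => // _ E; move: dn0; rewrite /dn E //.
    by case: ifP => h1; [|case: ifP => h2]; rewrite //; exfalso; lia.
  - by case: ifP => h1; [|case: ifP => h2]; rewrite //; exfalso; lia.
split => // d' s' sub.
apply/eqP; rewrite eqEsubset sub andbT; apply/subsetP => a ha.
have sa := snc_sort s' ha; have [r1 r2 r3] := sortable_range sa.
case hL: (inL d (aleft a)).
  case/inLP: hL => b hb e.
  by rewrite (snc_l s' ha (subsetP sub b hb) (esym e)).
case hR: (inR d (aright a)).
  case/inRP: hR => b hb e.
  by rewrite (snc_r s' ha (subsetP sub b hb) (esym e)).
have nl : ~~ Lw (aleft a) by rewrite -eL hL.
have nr : ~~ Rw (aright a) by rewrite -eR hR.
exfalso.
case: (ltngtP (aright a) (aleft a).+2) => hr.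
- have [p ep] : exists p, aleft a = p.+1 by exists (aleft a).-1; lia.
  have e : aright a = p.+2 by lia.
  rewrite ep in nl; rewrite e in nr.
  have hpn : p < n by lia.
  have [b hb /andP[h1 h2]] := cov p hpn nl nr.
  have := snc_nc s' ha (subsetP sub b hb).
  by rewrite ep e NCb.
- have hn2 : (aleft a).+2 <= n.+1 by lia.
  have := bw (aleft a) r1 hn2; rewrite (negbTE nl) /= -eR => /inRP [b hb eb].
  have [_ hb2 _] := sortable_range (snc_sort s hb).
  have nb : aleft b != aleft a.
    by apply/eqP => e; move/negbT: hL; rewrite -e => /negP; apply; apply/inLP; exists b.
  have := snc_nc s' (subsetP sub b hb) ha.
  by rewrite eb NC //; lia.
- have hn2 : (aleft a).+2 <= n.+1 by lia.
  have := bw (aleft a) r1 hn2.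
  by rewrite (negbTE nl) -hr (negbTE nr).
Qed.

End Surj.

End Main.

Theorem theorem8p10 (n : nat) : 1 <= n ->
  [/\ (forall d : {set arcT n}, is_MAD d -> Mbar n.+1 (Psi d)),
      (forall d1 d2 : {set arcT n}, is_MAD d1 -> is_MAD d2 -> Psi d1 = Psi d2 -> d1 = d2)
    & (forall w : seq step, Mbar n.+1 w -> exists2 d : {set arcT n}, is_MAD d & Psi d = w)].
Proof.
move=> _; split.
- by move=> d; apply: Psi_Mbar.
- by move=> d1 d2; apply: Psi_inj.
- by move=> w Mw; apply: surj.
Qed.
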